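(* Let $f: (\mathbb{R}^{+})^n \to (\mathbb{R}^{+})^n$ be homogeneous and monotone. Then $f$ has an eigenvector in $(\mathbb{R}^{+})^n$ if and only if some orbit $\{f^k(x) : k \in \mathbb{N}\}$ (with $x \in (\mathbb{R}^{+})^n$) is bounded in the Hilbert projective metric; moreover in that case all orbits of $f$ are bounded in the Hilbert projective metric.
   Context: Homogeneous: $f(\lambda x) = \lambda f(x)$ for all $\lambda > 0$; monotone: $x \le y$ componentwise implies $f(x) \le f(y)$. An eigenvector is $x \in (\mathbb{R}^{+})^n$ with $f(x) = \lambda x$ for some $\lambda > 0$. The Hilbert projective metric on $(\mathbb{R}^{+})^n$ is $d_H(y,z) = \max_i \log(y_i/z_i) - \min_i \log(y_i/z_i)$; a set $A$ is bounded in it if $\sup_{y,z \in A} d_H(y,z) < \infty$. *)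

(* Defs.v *)
From mathcomp Require Import all_boot all_order all_algebra.
From mathcomp Require Import all_classical all_reals all_analysis.
Set Implicit Arguments. Unset Strict Implicit. Unset Printing Implicit Defensive.
Import Order.TTheory GRing.Theory Num.Theory.
Local Open Scope ring_scope.

Definition posvec (R : realType) (n : nat) (x : 'I_n -> R) : Prop :=
  forall i, 0 < x i.

Definition maps_pos (R : realType) (n : nat) (f : ('I_n -> R) -> ('I_n -> R)) :=
  forall x, posvec x -> posvec (f x).

Definition is_homogeneous (R : realType) (n : nat) (f : ('I_n -> R) -> ('I_n -> R)) :=
  forall (x : 'I_n -> R) (lam : R), posvec x -> 0 < lam ->
    forall i, f (fun j => lam * x j) i = lam * f x i.

Definition is_monotone (R : realType) (n : nat) (f : ('I_n -> R) -> ('I_n -> R)) :=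
  forall x y : 'I_n -> R, posvec x -> posvec y -> (forall i, x i <= y i) ->
    forall i, f x i <= f y i.

Definition is_eigenvector (R : realType) (n : nat) (f : ('I_n -> R) -> ('I_n -> R))
  (x : 'I_n -> R) : Prop :=
  posvec x /\ exists lam : R, 0 < lam /\ forall i, f x i = lam * x i.

(* Hilbert projective metric:
   max_i log(y_i/z_i) - min_i log(y_i/z_i), written as
   max_{i,j} (log(y_i/z_i) - log(y_j/z_j)) (equal for n >= 1; 0 for n = 0). *)
Definition dH (R : realType) (n : nat) (y z : 'I_n -> R) : R :=
  \big[Num.max/0]_(i < n) \big[Num.max/0]_(j < n)
     (ln (y i / z i) - ln (y j / z j)).

Definition hbounded (R : realType) (n : nat) (A : set ('I_n -> R)) : Prop :=
  exists M : R, forall y z, A y -> A z -> dH y z <= M.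

Definition forbit (R : realType) (n : nat) (f : ('I_n -> R) -> ('I_n -> R))
  (x : 'I_n -> R) : set ('I_n -> R) :=
  [set y | exists k : nat, y = iter k f x].

(* Main.v *)
Require Import Defs.
From mathcomp Require Import all_boot all_order all_algebra.
From mathcomp Require Import all_classical all_reals all_analysis.
From mathcomp Require Import ring lra.
Set Implicit Arguments. Unset Strict Implicit. Unset Printing Implicit Defensive.
Import Order.TTheory GRing.Theory Num.Theory.
Local Open Scope ring_scope.

Section Basics.
Variables (R : realType) (n : nat) (f : ('I_n -> R) -> ('I_n -> R)).
Implicit Types (x y u : 'I_n -> R).
Hypotheses (fpos : maps_pos f) (fhom : is_homogeneous f) (fmon : is_monotone f).

Lemma posvec_scale (c : R) x : 0 < c -> posvec x -> posvec (fun j => c * x j).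
Proof. by move=> c0 px i; apply: mulr_gt0. Qed.

Lemma mono_lo (c : R) x y : 0 < c -> posvec x -> posvec y ->
  (forall i, c * x i <= y i) -> forall i, c * f x i <= f y i.
Proof.
move=> c0 px py H i; rewrite -fhom //; apply: fmon => //.
exact: posvec_scale.
Qed.

Lemma mono_up (c : R) x y : 0 < c -> posvec x -> posvec y ->
  (forall i, x i <= c * y i) -> forall i, f x i <= c * f y i.
Proof.
move=> c0 px py H i; rewrite -fhom //; apply: fmon => //.
exact: posvec_scale.
Qed.

Lemma iter_pos k x : posvec x -> posvec (iter k f x).
Proof. by move=> px; elim: k => [|k IH] //=; apply: fpos. Qed.

Lemma iter_lo (a mu : R) u x : 0 < a -> 0 < mu -> posvec u -> posvec x ->
  (forall i, mu * u i <= f u i) -> (forall i, a * u i <= x i) ->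
  forall k i, a * mu ^+ k * u i <= iter k f x i.
Proof.
move=> a0 m0 pu px Hu Hx; elim=> [|k IH] i /=; first by rewrite expr0 mulr1.
have amk : 0 < a * mu ^+ k by rewrite mulr_gt0 // exprn_gt0.
apply: le_trans (mono_lo amk pu (iter_pos k px) IH i).
by rewrite exprSr mulrA -(mulrA (a * mu ^+ k)) ler_wpM2l // ltW.
Qed.

Lemma iter_up (b mu : R) u x : 0 < b -> 0 < mu -> posvec u -> posvec x ->
  (forall i, f u i <= mu * u i) -> (forall i, x i <= b * u i) ->
  forall k i, iter k f x i <= b * mu ^+ k * u i.
Proof.
move=> b0 m0 pu px Hu Hx; elim=> [|k IH] i /=; first by rewrite expr0 mulr1.
have bmk : 0 < b * mu ^+ k by rewrite mulr_gt0 // exprn_gt0.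
apply: le_trans (mono_up bmk (iter_pos k px) pu IH i) _.
by rewrite exprSr mulrA -(mulrA (b * mu ^+ k)) ler_wpM2l // ltW.
Qed.

End Basics.

Lemma pos_compare (R : realType) n (y z : 'I_n -> R) : posvec y -> posvec z ->
  exists c, 0 < c /\ forall i, c * y i <= z i.
Proof.
move=> py pz; set S := \sum_(i < n) y i / z i.
have S0 : 0 <= S by apply: sumr_ge0 => i _; apply: divr_ge0; apply: ltW.
have S1 : 0 < 1 + S by rewrite ltr_wpDr.
exists (1 + S)^-1; split; first by rewrite invr_gt0.
move=> i; have t : y i / z i <= 1 + S.
  rewrite /S (bigD1 i) //= addrCA ler_wpDr //.
  by rewrite addr_ge0 // sumr_ge0 // => j _; apply: divr_ge0; apply: ltW.
rewrite ler_pdivrMr // in t.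
rewrite mulrC -ler_pdivlMr ?invr_gt0 //; by rewrite invrK mulrC.
Qed.

Lemma ln_diff_le (R : realType) (P Q al be rho : R) : 0 < P -> 0 < Q -> 0 < al -> 0 < be -> 0 < rho ->
  P <= al * rho -> be * rho <= Q -> ln P - ln Q <= ln al - ln be.
Proof.
move=> P0 Q0 a0 b0 r0 HP HQ.
have h1 : ln P <= ln al + ln rho.
  by rewrite -lnM ?posrE // ler_ln ?posrE ?mulr_gt0.
have h2 : ln be + ln rho <= ln Q.
  by rewrite -lnM ?posrE // ler_ln ?posrE ?mulr_gt0.
lra.
Qed.

Lemma dH_le (R : realType) n (y z : 'I_n -> R) M : 0 <= M ->
  (forall i j, ln (y i / z i) - ln (y j / z j) <= M) -> dH y z <= M.
Proof.
move=> M0 H; rewrite /dH; apply: bigmax_le => // i _; apply: bigmax_le => // j _.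
Qed.

Lemma dH_ge (R : realType) n (y z : 'I_n -> R) i j :
  ln (y i / z i) - ln (y j / z j) <= dH y z.
Proof.
rewrite /dH; apply: le_trans (le_bigmax _ _ i).
exact: (le_bigmax _ (fun j => ln (y i / z i) - ln (y j / z j)) j).
Qed.

Lemma eig_bounded (R : realType) n (f : ('I_n -> R) -> ('I_n -> R)) :
  maps_pos f -> is_homogeneous f -> is_monotone f ->
  (exists u, is_eigenvector f u) -> forall x, posvec x -> hbounded (forbit f x).
Proof.
move=> fpos fhom fmon [u [pu [lam [l0 Hu]]]] x px.
have [a [a0 Ha]] := pos_compare pu px.
have [c [c0 Hc]] := pos_compare px pu.
set b := c^-1; have b0 : 0 < b by rewrite invr_gt0.
have Hb : forall i, x i <= b * u i.
  by move=> i; rewrite /b mulrC ler_pdivlMr // mulrC.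
have lo := iter_lo fpos fhom fmon a0 l0 pu px (fun i => ltac:(by rewrite Hu)) Ha.
have up := iter_up fpos fhom fmon b0 l0 pu px (fun i => ltac:(by rewrite Hu)) Hb.
exists (Num.max 0 (ln (b / a) - ln (a / b))).
move=> y z [k ->] [m ->]; apply: dH_le; first by rewrite le_max lexx.
move=> i j; have Mge : forall t : R, t <= Num.max 0 t by move=> t; rewrite le_max lexx orbT.
apply: le_trans (Mge _).
have pk := iter_pos fpos k px; have pm := iter_pos fpos m px.
have rho0 : 0 < lam ^+ k / lam ^+ m by rewrite divr_gt0 // exprn_gt0.
apply: (ln_diff_le (rho := lam ^+ k / lam ^+ m)) => //; rewrite ?divr_gt0 //.
- apply: (@le_trans _ _ ((b * lam ^+ k * u i) / (a * lam ^+ m * u i))).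
    apply: ler_pM; first exact: ltW (pk i).
    + by rewrite invr_ge0 ltW.
    + exact: up.
    + by rewrite lef_pV2 ?posrE ?mulr_gt0 ?exprn_gt0.
  rewrite le_eqVlt; apply/orP; left; apply/eqP; field.
  by rewrite !gt_eqF ?exprn_gt0.
- apply: (@le_trans _ _ ((a * lam ^+ k * u j) / (b * lam ^+ m * u j))).
    rewrite le_eqVlt; apply/orP; left; apply/eqP; field.
    by rewrite !gt_eqF ?exprn_gt0.
  apply: ler_pM.
  + by rewrite ltW // !mulr_gt0 ?exprn_gt0.
  + by rewrite invr_ge0 ltW // !mulr_gt0 ?exprn_gt0.
  + exact: lo.
  + by rewrite lef_pV2 ?posrE ?mulr_gt0 ?exprn_gt0.
Qed.

Section Tarski.
Variables (R : realType) (n : nat) (f : ('I_n -> R) -> ('I_n -> R)).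
Hypotheses (fpos : maps_pos f) (fhom : is_homogeneous f) (fmon : is_monotone f).

Lemma tarski (lam : R) (s t : 'I_n -> R) : 0 < lam -> posvec s ->
  (forall i, s i <= t i) -> (forall i, lam * s i <= f s i) ->
  (forall i, f t i <= lam * t i) -> exists u, is_eigenvector f u.
Proof.
move=> l0 ps st Hs Ht.
have pt : posvec t by move=> i; exact: lt_le_trans (ps i) (st i).
pose Y := fun y : 'I_n -> R => (forall i, s i <= y i <= t i) /\ (forall i, lam * y i <= f y i).
pose E := fun (i : 'I_n) (r : R) => exists y, Y y /\ r = y i.
have Ys : Y s by split => // i; rewrite lexx st.
have hs : forall i, has_sup (E i).
  move=> i; split; first by exists (s i), s.
  by exists (t i) => r [y [[Hy _] ->]]; case/andP: (Hy i).
pose u := fun i => sup (E i).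
have Yu : forall y, Y y -> forall i, y i <= u i.
  by move=> y Yy i; apply: sup_upper_bound (hs i) _ _; exists y.
have su : forall i, s i <= u i by apply: Yu.
have pu : posvec u by move=> i; exact: lt_le_trans (ps i) (su i).
have ut : forall i, u i <= t i.
  move=> i; apply: ge_sup; first by exists (s i), s.
  by move=> r [y [[Hy _] ->]]; case/andP: (Hy i).
have Ypos : forall y, Y y -> posvec y.
  by move=> y [Hy _] i; case/andP: (Hy i) => h _; exact: lt_le_trans (ps i) h.
have lu : forall i, lam * u i <= f u i.
  move=> i; rewrite mulrC -ler_pdivlMr //; apply: ge_sup; first by exists (s i), s.
  move=> r [y [Yy ->]]; rewrite ler_pdivlMr // mulrC.
  apply: le_trans (proj2 Yy i) _; apply: fmon => //; first exact: Ypos.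
  exact: Yu.
pose z := fun i => f u i / lam.
have pz : posvec z by move=> i; rewrite divr_gt0 //; exact: fpos.
have uz : forall i, u i <= z i by move=> i; rewrite ler_pdivlMr // mulrC.
have Yz : Y z.
  split=> i.
    apply/andP; split; first exact: le_trans (su i) (uz i).
    rewrite ler_pdivrMr // mulrC; apply: le_trans (Ht i).
    exact: fmon.
  rewrite /z mulrC divfK ?gt_eqF //; exact: fmon.
have zu : forall i, z i <= u i by apply: Yu.
exists u; split => //; exists lam; split => // i.
apply/eqP; rewrite eq_le lu andbT.
by rewrite mulrC -ler_pdivrMr //; exact: zu.
Qed.

End Tarski.
Lemma lowB (R : realType) (a b B : R) : 0 < a -> 0 < b -> 0 < B -> b <= B * a -> B^-1 <= b^-1 * a.
Proof.
move=> a0 b0 B0 h.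
by rewrite mulrC ler_pdivlMr // -ler_pdivlMl ?invr_gt0 // invrK.
Qed.

Section ExactSub.
Variables (R : realType) (n : nat) (f : ('I_n -> R) -> ('I_n -> R)).
Hypotheses (fpos : maps_pos f) (fhom : is_homogeneous f) (fmon : is_monotone f).

Lemma exact_sub (lam B : R) (j0 : 'I_n) : 0 < lam -> 0 < B ->
  (forall nu, 0 < nu -> nu < lam -> exists v, posvec v /\
      (forall i j, v i <= B * v j) /\ (forall i, nu * v i <= f v i)) ->
  exists s, posvec s /\ (forall i, B^-1 <= s i <= B) /\
      (forall i, lam * s i <= f s i).
Proof.
move=> l0 B0 H.
have Bi0 : 0 < B^-1 by rewrite invr_gt0.
pose P := fun (nu : R) (v : 'I_n -> R) =>
  (forall i, B^-1 <= v i <= B) /\ (forall i, nu * v i <= f v i).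
have Ppos : forall nu v, P nu v -> posvec v.
  by move=> nu v [Hv _] i; case/andP: (Hv i) => h _; exact: lt_le_trans Bi0 h.
have Pne : forall nu, 0 < nu -> nu < lam -> exists v, P nu v.
  move=> nu n0 nl; have [v [pv [Bv Hv]]] := H nu n0 nl.
  have vj0 : 0 < v j0 := pv j0.
  exists (fun i => (v j0)^-1 * v i); split=> i.
    apply/andP; split.
      exact: lowB.
    by rewrite mulrC ler_pdivrMr // mulrC.
  rewrite fhom // ?invr_gt0 //; rewrite mulrCA ler_wpM2l // ?invr_ge0 ?ltW //.
pose E := fun (nu : R) (i : 'I_n) (r : R) => exists v, P nu v /\ r = v i.
have hsE : forall nu i, 0 < nu -> nu < lam -> has_sup (E nu i).
  move=> nu i n0 nl; have [v Pv] := Pne nu n0 nl; split; first by exists (v i), v.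
  by exists B => r [w [[Hw _] ->]]; case/andP: (Hw i).
pose sn := fun nu i => sup (E nu i).
have snB : forall nu i, 0 < nu -> nu < lam -> B^-1 <= sn nu i <= B.
  move=> nu i n0 nl; have [v Pv] := Pne nu n0 nl; apply/andP; split.
    have h1 : v i <= sn nu i by apply: sup_upper_bound (hsE nu i n0 nl) _ _; exists v.
    by apply: le_trans h1; case: Pv => Hv _; case/andP: (Hv i).
  apply: ge_sup; first by exists (v i), v.
  by move=> r [w [[Hw _] ->]]; case/andP: (Hw i).
have snpos : forall nu, 0 < nu -> nu < lam -> posvec (sn nu).
  by move=> nu n0 nl i; case/andP: (snB nu i n0 nl) => h _; exact: lt_le_trans Bi0 h.
have snub : forall nu v, 0 < nu -> nu < lam -> P nu v -> forall i, v i <= sn nu i.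
  by move=> nu v n0 nl Pv i; apply: sup_upper_bound (hsE nu i n0 nl) _ _; exists v.
have snsub : forall nu i, 0 < nu -> nu < lam -> nu * sn nu i <= f (sn nu) i.
  move=> nu i n0 nl; have [v Pv] := Pne nu n0 nl.
  rewrite mulrC -ler_pdivlMr //; apply: ge_sup; first by exists (v i), v.
  move=> r [w [Pw ->]]; rewrite ler_pdivlMr // mulrC.
  apply: le_trans (proj2 Pw i) _; apply: fmon; first exact: Ppos Pw.
    exact: snpos.
  exact: snub.
have snmon : forall nu1 nu2 i, 0 < nu1 -> nu1 <= nu2 -> nu2 < lam ->
    sn nu2 i <= sn nu1 i.
  move=> nu1 nu2 i n1 n12 n2l.
  have n20 : 0 < nu2 := lt_le_trans n1 n12.
  have n1l : nu1 < lam := le_lt_trans n12 n2l.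
  have [v Pv] := Pne nu2 n20 n2l.
  apply: ge_sup; first by exists (v i), v.
  move=> r [w [[Hw Hw2] ->]]; apply: snub => //; split => // j.
  apply: le_trans (Hw2 j); apply: ler_wpM2r => //.
  by apply: ltW; apply: Ppos (conj Hw Hw2) j.
have l2 : 0 < lam / 2 by rewrite divr_gt0.
have l2l : lam / 2 < lam by rewrite ltr_pdivrMr // ltr_pMr // ltr1n.
pose F := fun (i : 'I_n) (r : R) => exists nu, [/\ 0 < nu, nu < lam & r = sn nu i].
have hiF : forall i, has_inf (F i).
  move=> i; split; first by exists (sn (lam / 2) i), (lam / 2).
  exists B^-1 => r [nu [n0 nl ->]]; by case/andP: (snB nu i n0 nl).
pose s := fun i => inf (F i).
have sle : forall nu i, 0 < nu -> nu < lam -> s i <= sn nu i.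
  by move=> nu i n0 nl; apply: ge_inf (proj2 (hiF i)) _ _; exists nu.
have sB : forall i, B^-1 <= s i <= B.
  move=> i; apply/andP; split.
    apply: lb_le_inf; first by exists (sn (lam / 2) i), (lam / 2).
    by move=> r [nu [n0 nl ->]]; case/andP: (snB nu i n0 nl).
  apply: le_trans (sle _ i l2 l2l) _; by case/andP: (snB (lam / 2) i l2 l2l).
have ps : posvec s.
  by move=> i; case/andP: (sB i) => h _; exact: lt_le_trans Bi0 h.
have step4 : forall nu0, 0 < nu0 -> nu0 < lam -> forall i, nu0 * s i <= f s i.
  move=> nu0 n0 n0l.
  pose nu1 := (nu0 + lam) / 2.
  have n01 : nu0 < nu1 by rewrite /nu1 ltr_pdivlMr // mulrDr mulr1 ltrD2l.
  have n1l : nu1 < lam by rewrite /nu1 ltr_pdivrMr // mulrDr mulr1 ltrD2r.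
  have n10 : 0 < nu1 := lt_trans n0 n01.
  pose q := nu1 / nu0.
  have q1 : 1 < q by rewrite /q ltr_pdivlMr // mul1r.
  have q0 : 0 < q := lt_trans ltr01 q1.
  have Hi : forall i, exists nu, (0 < nu /\ nu < lam) /\ sn nu i < q * s i.
    move=> i.
    have e0 : 0 < (q - 1) * s i by rewrite mulr_gt0 // subr_gt0.
    have [r [nu [m0 ml ->]] hr] := inf_adherent e0 (hiF i).
    exists nu; split => //; apply: lt_le_trans hr _.
    by rewrite /s mulrBl mul1r addrCA subrr addr0.
  have [g Hg] := choice Hi.
  pose nus := Num.max nu1 (\big[Num.max/nu1]_(i < n) g i).
  have n1s : nu1 <= nus by rewrite /nus le_max lexx.
  have gs : forall i, g i <= nus.
    move=> i; rewrite /nus le_max; apply/orP; right.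
    exact: (le_bigmax _ g i).
  have nusl : nus < lam.
    rewrite /nus gt_max n1l /=; apply: bigmax_lt => // i _.
    by case: (Hg i) => [[_ h] _].
  have nus0 : 0 < nus := lt_le_trans n10 n1s.
  have snq : forall i, sn nus i <= q * s i.
    move=> i; case: (Hg i) => [[g0 gl] h]; apply: ltW; apply: le_lt_trans h.
    by apply: snmon => //; apply: gs.
  have fq := mono_up fhom fmon q0 (snpos nus nus0 nusl) ps snq.
  move=> i; rewrite -(ler_pM2l q0).
  apply: le_trans (fq i).
  apply: le_trans (snsub nus i nus0 nusl).
  rewrite mulrA (mulrC q) /q mulrCA divff ?gt_eqF // mulr1.
  apply: le_trans (_ : nus * s i <= _).
    by apply: ler_wpM2r => //; apply: ltW.
  by apply: ler_wpM2l; [apply: ltW | apply: sle].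
exists s; split => //; split => // i.
have si0 := ps i.
case: (lerP (lam * s i) (f s i)) => // hlt.
pose r := f s i / s i.
have fsi0 : 0 < f s i := fpos ps i.
have rl : r < lam by rewrite /r ltr_pdivrMr.
have r0 : 0 < r by rewrite divr_gt0.
pose nu0 := (r + lam) / 2.
have h : nu0 * s i <= f s i.
  apply: step4; first by rewrite /nu0 divr_gt0 // addr_gt0.
  by rewrite /nu0 ltr_pdivrMr // mulrDr mulr1 ltrD2r.
have : (f s i + lam * s i) / 2 <= f s i.
  apply: le_trans h; rewrite /nu0 /r le_eqVlt; apply/orP; left; apply/eqP.
  by field; rewrite gt_eqF.
lra.
Qed.
End ExactSub.

Section SubConstruct.
Variables (R : realType) (n : nat) (f : ('I_n -> R) -> ('I_n -> R)).
Hypotheses (fpos : maps_pos f) (fhom : is_homogeneous f) (fmon : is_monotone f).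

Lemma sub_construct (x : 'I_n -> R) (N : nat) (nu B : R) : posvec x -> 0 < nu -> 0 < B ->
  (0 < N)%N -> (forall i, nu ^+ N * x i <= iter N f x i) ->
  (forall k i j, iter k f x i <= B * iter k f x j) ->
  exists v, posvec v /\ (forall i j, v i <= B * v j) /\ (forall i, nu * v i <= f v i).
Proof.
move=> px n0 B0 N0 HN Hb.
case: N N0 HN => [//|N] _ HN.
pose T := fun (k : nat) (j : 'I_n) => (nu ^+ k)^-1 * iter k f x j.
have Tpos : forall k, posvec (T k).
  by move=> k j; rewrite mulr_gt0 ?invr_gt0 ?exprn_gt0 //; exact: iter_pos.
pose v := fun i => \big[Num.max/0]_(k < N.+1) T k i.
have Tv : forall k i, (k < N.+1)%N -> T k i <= v i.
  by move=> k i kN; exact: (le_bigmax _ (fun k : 'I_N.+1 => T k i) (Ordinal kN)).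
have pv : posvec v by move=> i; exact: lt_le_trans (Tpos 0%N i) (Tv 0%N i (ltn0Sn N)).
exists v; split => //; split.
  move=> i j; apply: bigmax_le => [|k _].
    by rewrite mulr_ge0 ?ltW.
  apply: le_trans (_ : B * T k j <= _); last first.
    by rewrite ler_wpM2l ?(ltW B0) //; exact: (Tv k j (ltn_ord k)).
  by rewrite /T mulrCA ler_wpM2l // ?invr_ge0 ?exprn_ge0 ?ltW.
have key : forall m i, (m < N.+1)%N -> (nu ^+ m)^-1 * iter m.+1 f x i <= f v i.
  move=> m i mN; rewrite /= -fhom //; last by rewrite invr_gt0 exprn_gt0.
    by apply: fmon => // [|j]; [exact: Tpos | exact: Tv].
  exact: iter_pos.
move=> i; rewrite mulrC -ler_pdivlMr //; apply: bigmax_le => [|[k kN] _] /=.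
  by rewrite divr_ge0 // ltW // fpos.
rewrite ler_pdivlMr // mulrC.
case: k kN => [|k] kN.
  apply: le_trans (key N i (ltnSn N)).
  rewrite /T expr0 invr1 mul1r.
  rewrite -(ler_pM2l (exprn_gt0 N n0)) [X in _ <= X]mulrA mulfV ?gt_eqF ?exprn_gt0 //.
  by rewrite mul1r mulrA -exprSr; exact: HN.
apply: le_trans (key k i (ltnW kN)).
rewrite /T exprSr le_eqVlt; apply/orP; left; apply/eqP; field.
by rewrite !gt_eqF ?exprn_gt0.
Qed.
End SubConstruct.

Definition vinv (R : realType) n (x : 'I_n -> R) := fun j => (x j)^-1.
Definition gdual (R : realType) n (f : ('I_n -> R) -> ('I_n -> R)) :=
  fun y i => (f (vinv y) i)^-1.

Lemma vinvK (R : realType) n (x : 'I_n -> R) : vinv (vinv x) = x.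
Proof. by apply: funext => j; rewrite /vinv invrK. Qed.

Lemma vinv_pos (R : realType) n (x : 'I_n -> R) : posvec x -> posvec (vinv x).
Proof. by move=> px j; rewrite /vinv invr_gt0. Qed.

Section Dual.
Variables (R : realType) (n : nat) (f : ('I_n -> R) -> ('I_n -> R)).
Hypotheses (fpos : maps_pos f) (fhom : is_homogeneous f) (fmon : is_monotone f).

Lemma gdual_pos : maps_pos (gdual f).
Proof. by move=> y py i; rewrite /gdual invr_gt0; apply: fpos; exact: vinv_pos. Qed.

Lemma gdual_hom : is_homogeneous (gdual f).
Proof.
move=> y lam py l0 i; rewrite /gdual.
have -> : vinv (fun j => lam * y j) = (fun j => lam^-1 * vinv y j).
  by apply: funext => j; rewrite /vinv invfM mulrC.
rewrite fhom ?invr_gt0 ?vinv_pos //.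
  have h0 : 0 < f (vinv y) i by apply: fpos; exact: vinv_pos.
  by field; rewrite !gt_eqF.
exact: vinv_pos.
Qed.

Lemma gdual_mon : is_monotone (gdual f).
Proof.
move=> y z py pz yz i; rewrite /gdual lef_pV2 ?posrE ?fpos ?vinv_pos //.
apply: fmon; [exact: vinv_pos | exact: vinv_pos | move=> j].
by rewrite /vinv lef_pV2 ?posrE.
exact: vinv_pos. exact: vinv_pos.
Qed.

Lemma iter_gdual k x : iter k (gdual f) (vinv x) = vinv (iter k f x).
Proof.
elim: k => [//|k IH] /=; rewrite IH; apply: funext => i.
by rewrite /gdual vinvK.
Qed.

End Dual.

Lemma ln_le_exp (R : realType) (a b M : R) : 0 < a -> 0 < b ->
  ln a - ln b <= M -> a <= expR M * b.
Proof.
move=> a0 b0 h; rewrite -(lnK a0) -(lnK b0) -expRD ler_expR; lra.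
Qed.

Lemma bernoulli_ineq (R : realType) (q : R) (N : nat) : 1 <= q ->
  1 + N%:R * (q - 1) <= q ^+ N.
Proof.
move=> q1; elim: N => [|N IH]; first by rewrite mul0r addr0 expr0.
rewrite exprSr -natr1.
have h0 : 0 <= q - 1 by rewrite subr_ge0.
have h1 : 0 <= N%:R * (q - 1) by rewrite mulr_ge0.
nra.
Qed.

Lemma pow_big (R : realType) (q K : R) : 1 < q -> exists N, (0 < N)%N /\ K <= q ^+ N.
Proof.
move=> q1; have h0 : 0 < q - 1 by rewrite subr_gt0.
pose x := `|K| / (q - 1).
have x0 : 0 <= x by rewrite divr_ge0 // ltW.
have hx := archi_boundP x0.
exists (Num.Def.archi_bound x).+1; split => //.
apply: le_trans (bernoulli_ineq _ (ltW q1)).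
have : `|K| < (Num.Def.archi_bound x).+1%:R * (q - 1).
  rewrite -ltr_pdivrMr //; apply: lt_le_trans hx _.
  by rewrite ler_nat.
have := ler_norm K; lra.
Qed.

Lemma ratio_bound (R : realType) (a b c d K B0 : R) : 0 < a -> 0 < b -> 0 < c -> 0 < d ->
  0 <= K -> a / c <= K * (b / d) -> c <= B0 * d -> a <= (K * B0) * b.
Proof.
move=> a0 b0 c0 d0 K0 h1 h2.
rewrite ler_pdivrMr // in h1.
apply: le_trans h1 _.
have -> : K * (b / d) * c = (K * (b / d)) * c by [].
have -> : K * B0 * b = (K * (b / d)) * (B0 * d) by field; rewrite gt_eqF.
by apply: ler_wpM2l => //; rewrite mulr_ge0 // divr_ge0 // ltW.
Qed.

Lemma inv_bound (R : realType) (a b B : R) : 0 < a -> 0 < b -> 0 < B ->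
  b <= B * a -> a^-1 <= B * b^-1.
Proof.
move=> a0 b0 B0 h.
rewrite -[B](invrK B) -invfM lef_pV2 ?posrE ?mulr_gt0 ?invr_gt0 //.
by rewrite mulrC ler_pdivrMr // mulrC.
Qed.

Lemma inv_sub (R : realType) (a b l : R) : 0 < a -> 0 < b -> 0 < l ->
  l^-1 * a <= b^-1 -> b <= l * a^-1.
Proof.
move=> a0 b0 l0 h.
have e : l * a^-1 = (l^-1 * a)^-1 by rewrite invfM invrK.
rewrite e -lef_pV2 ?posrE ?mulr_gt0 ?invr_gt0 //.
  by move: h; rewrite -[X in X <= _ -> _](invrK (l^-1 * a)).
by rewrite mulr_gt0 // invr_gt0.
Qed.

Lemma inv_le (R : realType) (a b p : R) : 0 < a -> 0 < b -> 0 < p ->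
  b <= p^-1 * a -> p * a^-1 <= b^-1.
Proof.
move=> a0 b0 p0 h.
have e : p * a^-1 = (p^-1 * a)^-1 by rewrite invfM invrK.
by rewrite e lef_pV2 ?posrE ?mulr_gt0 ?invr_gt0.
Qed.

Lemma bounded_eig (R : realType) n (f : ('I_n.+1 -> R) -> ('I_n.+1 -> R)) :
  maps_pos f -> is_homogeneous f -> is_monotone f ->
  forall x, posvec x -> hbounded (forbit f x) -> exists u, is_eigenvector f u.
Proof.
move=> fpos fhom fmon x px [M HM].
have pX : forall k, posvec (iter k f x) by move=> k; exact: iter_pos.
pose K := expR M.
have K0 : 0 < K by rewrite expR_gt0.
have cross : forall k i j, iter k f x i / x i <= K * (iter k f x j / x j).
  move=> k i j; rewrite /K; apply: ln_le_exp.
  - exact: divr_gt0 (pX k i) (px i).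
  - exact: divr_gt0 (pX k j) (px j).
  have h1 := dH_ge (iter k f x) x i j.
  have h2 : dH (iter k f x) x <= M by apply: HM; [exists k | exists 0%N].
  exact: le_trans h1 h2.
have [c [c0 Hc]] := @pos_compare R n.+1 (fun _ => 1) x (fun _ => ltr01) px.
have [d [d0 Hd]] := @pos_compare R n.+1 x (fun _ => 1) px (fun _ => ltr01).
pose B0 := (d * c)^-1.
have HB0 : forall i j, x i <= B0 * x j.
  move=> i j; have h1 := Hd i; have h2 := Hc j; rewrite mulr1 in h2.
  rewrite /B0 invfM -mulrA; rewrite -ler_pdivlMl // in h1.
  apply: le_trans h1 _; rewrite ler_pM2l ?invr_gt0 //.
  by rewrite ler_pdivlMl // mulr1.
pose B := K * B0.
have B0p : 0 < B0 by rewrite invr_gt0 mulr_gt0.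
have Bp : 0 < B by rewrite mulr_gt0.
have Hwithin : forall k i j, iter k f x i <= B * iter k f x j.
  move=> k i j.
  exact: (ratio_bound (pX k i) (pX k j) (px i) (px j) (ltW K0) (cross k i j) (HB0 i j)).
pose S := fun nu : R => 0 < nu /\ exists N, (0 < N)%N /\
  forall i, nu ^+ N * x i <= iter N f x i.
have [c1 [c10 Hc1]] := pos_compare px (pX 1%N).
have [e [e0 He]] := pos_compare (pX 1%N) px.
have mup : forall k i, iter k f x i <= 1 * (e^-1) ^+ k * x i.
  apply: iter_up => //; rewrite ?invr_gt0 // => i.
    by rewrite ler_pdivlMl // mulrC; exact: He.
  by rewrite mul1r.
have Sc1 : S c1.
  split => //; exists 1%N; split => //.
  try by move=> i; rewrite expr1; exact: Hc1.
have hsS : has_sup S.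
  split; first by exists c1.
  exists (e^-1); move=> nu [n0 [N [N0 HN]]].
  have h1 := HN ord0; have h2 := mup N ord0.
  have h : nu ^+ N * x ord0 <= 1 * e^-1 ^+ N * x ord0 by exact: le_trans h1 h2.
  rewrite mul1r (ler_pM2r (px ord0)) in h.
  have n0' : nu \in Num.nneg by rewrite nnegrE ltW.
  have e0' : e^-1 \in Num.nneg by rewrite nnegrE invr_ge0 ltW.
  by rewrite (ler_pXn2r N0 n0' e0') in h.
pose lam := sup S.
have Slam : forall nu, S nu -> nu <= lam.
  move=> nu Snu; have := sup_upper_bound hsS; apply; exact: Snu.
have lam0 : 0 < lam.
  exact: (lt_le_trans c10 (Slam _ Sc1)).
have Hsub : forall nu, 0 < nu -> nu < lam -> exists v, posvec v /\
    (forall i j, v i <= B * v j) /\ (forall i, nu * v i <= f v i).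
  move=> nu n0 nl.
  have eps0 : 0 < lam - nu by rewrite subr_gt0.
  have [nu' [n'0 [N [N0 HN]]] hn'] := sup_adherent eps0 hsS.
  have nn' : nu < nu' by move: hn'; rewrite /lam; lra.
  have [v [pv [Bv Hv]]] := sub_construct fpos fhom fmon px n'0 Bp N0 HN Hwithin.
  exists v; split => //; split => // i.
  apply: le_trans (Hv i); apply: ler_wpM2r; [exact: ltW | exact: ltW].
have [s [ps [sB sl]]] := exact_sub fpos fhom fmon ord0 lam0 Bp Hsub.
have superN : forall mu, lam < mu -> exists N, (0 < N)%N /\
    forall j, iter N f x j <= mu ^+ N * x j.
  move=> mu lm.
  pose nu := (lam + mu) / 2.
  have lnu : lam < nu by rewrite /nu ltr_pdivlMr // mulrDr mulr1 ltrD2l.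
  have numu : nu < mu by rewrite /nu ltr_pdivrMr // mulrDr mulr1 ltrD2r.
  have nu0 : 0 < nu := lt_trans lam0 lnu.
  have mu0 : 0 < mu := lt_trans nu0 numu.
  have q1 : 1 < mu / nu by rewrite ltr_pdivlMr // mul1r.
  have [N [N0 KN]] := pow_big K q1.
  exists N; split => //.
  have nS : ~ S nu by move=> Snu; have := Slam _ Snu; rewrite leNgt lnu.
  have : ~ (forall i, nu ^+ N * x i <= iter N f x i).
    by move=> H; apply: nS; split => //; exists N.
  move/existsNP => [i0 Hi0].
  have hi0 : iter N f x i0 / x i0 < nu ^+ N.
    by rewrite ltr_pdivrMr // ltNge; apply/negP.
  move=> j; rewrite -ler_pdivrMr //.
  apply: le_trans (cross N j i0) _.
  apply: le_trans (_ : K * nu ^+ N <= _).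
    by apply: ler_wpM2l; [exact: ltW | exact: ltW].
  apply: le_trans (_ : (mu / nu) ^+ N * nu ^+ N <= _).
    by apply: ler_wpM2r => //; rewrite exprn_ge0 // ltW.
  by rewrite -exprMn divfK ?gt_eqF.
pose g := gdual f.
have gpos : maps_pos g := gdual_pos fpos.
have ghom : is_homogeneous g := gdual_hom fpos fhom.
have gmon : is_monotone g := gdual_mon fpos fmon.
have lami0 : 0 < lam^-1 by rewrite invr_gt0.
have Hsup : forall nu, 0 < nu -> nu < lam^-1 -> exists v, posvec v /\
    (forall i j, v i <= B * v j) /\ (forall i, nu * v i <= g v i).
  move=> nu n0 nl.
  have lmu : lam < nu^-1.
    by rewrite -ltf_pV2 ?posrE ?invr_gt0 // invrK.
  have [N [N0 HN]] := superN _ lmu.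
  apply: (sub_construct gpos ghom gmon (vinv_pos px) n0 Bp N0).
    move=> i; rewrite iter_gdual /vinv.
    apply: inv_le; [exact: px | exact: pX | exact: exprn_gt0 |].
    by rewrite -exprVn; exact: HN.
  move=> k i j; rewrite iter_gdual /vinv.
  exact: (inv_bound (pX k i) (pX k j) Bp (Hwithin k j i)).
have [s' [ps' [s'B s'l]]] := exact_sub gpos ghom gmon ord0 lami0 Bp Hsup.
pose t := vinv s'.
have pt : posvec t := vinv_pos ps'.
have ft : forall i, f t i <= lam * t i.
  move=> i; apply: inv_sub; [exact: ps' | exact: fpos | exact: lam0 |].
  exact: s'l.
pose al := B^-1 * B^-1.
have al0 : 0 < al by rewrite mulr_gt0 // invr_gt0.
apply: (@tarski R n.+1 f fpos fmon lam (fun i => al * s i) t lam0).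
- exact: posvec_scale.
- move=> i; rewrite /t /vinv /al.
  have h1 : s i <= B by case/andP: (sB i).
  have h2 : s' i <= B by case/andP: (s'B i).
  apply: le_trans (_ : B^-1 * B^-1 * B <= _).
    by apply: ler_wpM2l => //; exact: ltW.
  rewrite -mulrA mulVf ?gt_eqF // mulr1 lef_pV2 ?posrE //.
- move=> i; rewrite fhom //; rewrite mulrCA; apply: ler_wpM2l; [exact: ltW | exact: sl].
- exact: ft.
Qed.

Unset Implicit Arguments.

Theorem theorem3 (R : realType) (n : nat) (f : ('I_n -> R) -> ('I_n -> R)) :
  maps_pos f -> is_homogeneous f -> is_monotone f ->
  ((exists x, is_eigenvector f x) <->
     (exists x, posvec x /\ hbounded (forbit f x))) /\
  ((exists x, is_eigenvector f x) ->
     forall x, posvec x -> hbounded (forbit f x)).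
Proof.
move=> fpos fhom fmon.
have Hall := eig_bounded fpos fhom fmon.
split => //; split.
  move=> [u Hu]; exists u; split; first exact: Hu.1.
  by apply: Hall; [exists u | exact: Hu.1].
move=> [x [px hb]].
move: f fpos fhom fmon Hall x px hb; case: n => [|n] f fpos fhom fmon Hall x px hb.
  exists (fun _ => 1); split; first by case.
  by exists 1; split => //; case.
exact: bounded_eig fpos fhom fmon x px hb.
Qed.
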